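(* Let $(X,Y)\sim\mathcal D$ with $Y\in[0,1]^d$, $f:\mathcal X\to[0,1]^d$ a forecaster, $\mathcal A$ a finite action set and $u(a,p)=r_a\cdot p+c_a$ with $r_a\in\mathbb R^d$, $c_a\in\mathbb R$; let $\mathrm{val}(p)=\max_{a\in\mathcal A}u(a,p)$ and $L:=\max_{a}\|r_a\|_2$. Let $\{B_j\}_{j=1}^J$ be a measurable partition of $[0,1]^d$, write $E_j=\{f(X)\in B_j\}$, $P_j=\mathbb P(E_j)>0$, $m_j=\mathbb E[f(X)\mid E_j]$. For $\varepsilon\ge0$ let $$\mathcal Q_\varepsilon=\Big\{q:[0,1]^d\to[0,1]^d:\ \big\|\mathbb E[\mathbf 1_{\{f(X)\in B_j\}}\{q(f(X))-f(X)\}]\big\|_2\le\varepsilon,\ j=1,\ldots,J\Big\}.$$ Then $$\sum_{j=1}^J P_j\,\mathrm{val}(m_j)-JL\varepsilon\ \le\ \min_{q\in\mathcal Q_\varepsilon}\mathbb E\big[\mathrm{val}(q(f(X)))\big]\ \le\ \sum_{j=1}^J P_j\,\mathrm{val}(m_j).$$ Moreover, there exists a worst-case (or arbitrarily near-worst-case) belief that is piecewise constant: for each $j$ one can take $q^\star_\varepsilon(v)=p_j^\star$ for $v\in B_j$ (a.e.), with $$p_j^\star\in\arg\min\{\mathrm{val}(p): p\in[0,1]^d,\ \|p-m_j\|_2\le\varepsilon/P_j\},$$ and the robust action on $B_j$ best-responds to $p_j^\star$, i.e. lies in $\arg\max_{a\in\mathcal A}u(a,p_j^\star)$.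
   Context: ''a.e.'' refers to the distribution of $f(X)$. Bins with $P_j=0$ are ignorable and are excluded. *)

(* Defs.v *)
(* Vectors of R^d are d.-tuple R,
   which carries the product (= Borel) sigma-algebra of MathComp-Analysis. *)
From HB Require Import structures.
From mathcomp Require Import all_boot all_order all_algebra.
From mathcomp Require Import all_classical all_reals all_analysis.
Set Implicit Arguments. Unset Strict Implicit. Unset Printing Implicit Defensive.
Import Order.TTheory GRing.Theory Num.Theory.
Local Open Scope classical_set_scope.
Local Open Scope ring_scope.

Section Defs.
Context {R : realType} {d : nat}.

Definition cube : set (d.-tuple R) := [set v | forall i : 'I_d, 0 <= tnth v i <= 1].

Definition vsub (p q : d.-tuple R) : d.-tuple R := [tuple tnth p i - tnth q i | i < d].

Definition dot (p q : d.-tuple R) : R := \sum_(i < d) tnth p i * tnth q i.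
Definition norm2 (p : d.-tuple R) : R := Num.sqrt (\sum_(i < d) tnth p i ^+ 2).

(* expectation of a real random variable (all r.v.'s used below are bounded
   and measurable, hence integrable) *)
Definition Ex {dO} {O : measurableType dO} (P : probability O R) (g : O -> R) : R :=
  fine (\int[P]_w (g w)%:E).

Definition Evec {dO} {O : measurableType dO} (P : probability O R)
  (g : O -> d.-tuple R) : d.-tuple R := [tuple Ex P (fun w => tnth (g w) i) | i < d].

Definition util {A : finType} (r : A -> d.-tuple R) (c : A -> R) (a : A) (p : d.-tuple R) : R :=
  dot (r a) p + c a.

(* val(p) = max_a u(a,p)  (A is nonempty, witnessed by a0) *)
Definition pval {A : finType} (a0 : A) (r : A -> d.-tuple R) (c : A -> R) (p : d.-tuple R) : R :=
  \big[Num.max/util r c a0 p]_(a : A) util r c a p.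

Definition Lconst {A : finType} (r : A -> d.-tuple R) : R :=
  \big[Num.max/0]_(a : A) norm2 (r a).

Definition binprob {dO} {O : measurableType dO} (P : probability O R)
  (V : O -> d.-tuple R) (B : set (d.-tuple R)) : R := fine (P (V @^-1` B)).

Definition binmean {dO} {O : measurableType dO} (P : probability O R)
  (V : O -> d.-tuple R) (B : set (d.-tuple R)) : d.-tuple R :=
  [tuple (binprob P V B)^-1 * Ex P (fun w => \1_B (V w) * tnth (V w) i) | i < d].

Definition Qset {dO} {O : measurableType dO} (P : probability O R)
  (V : O -> d.-tuple R) {J : nat} (B : 'I_J -> set (d.-tuple R)) (eps : R)
  (q : d.-tuple R -> d.-tuple R) : Prop :=
  [/\ measurable_fun cube q,
      (forall v, cube v -> cube (q v)) &
      forall j : 'I_J,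
        norm2 (Evec P (fun w => [tuple \1_(B j) (V w) * tnth (vsub (q (V w)) (V w)) i | i < d]))
        <= eps].

End Defs.

Section Defs2.
Context {R : realType} {d : nat}.
Definition is_worst_belief {A : finType} (a0 : A) (r : A -> d.-tuple R) (c : A -> R)
  (m : d.-tuple R) (rad : R) (p : d.-tuple R) : Prop :=
  [/\ cube p, norm2 (vsub p m) <= rad &
      forall p', cube p' -> norm2 (vsub p' m) <= rad -> pval a0 r c p <= pval a0 r c p'].
End Defs2.

(* Main.v *)
Require Import Defs.
From HB Require Import structures.
From mathcomp Require Import all_boot all_order all_algebra.
From mathcomp Require Import all_classical all_reals all_analysis.
From mathcomp Require Import measurable_realfun.
From mathcomp Require Import ring lra.
Import Order.TTheory GRing.Theory Num.Theory.
Import numFieldNormedType.Exports.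
Local Open Scope classical_set_scope.
Local Open Scope ring_scope.
Set Implicit Arguments. Unset Strict Implicit. Unset Printing Implicit Defensive.


Section ExLemmas.
Context {R : realType} {dO : measure_display} {O : measurableType dO} (P : probability O R).

Definition bmf (g : O -> R) := measurable_fun setT g /\ exists M : R, forall w, `|g w| <= M.

Lemma bmf_int g : bmf g -> P.-integrable setT (EFin \o g).
Proof.
move=> [mg [M hM]]; apply/integrableP; split; first exact/measurable_EFinP.
apply: le_lt_trans.
  apply: (integral_le_bound `|M|%:E) => //.
    by apply: measurableT_comp => //; exact/measurable_EFinP.
  by apply: aeW => z _; rewrite /= lee_fin (le_trans (hM z)) ?ler_norm.
apply: lte_mul_pinfty => //.
by apply: (le_lt_trans (probability_le1 P _)) => //; rewrite ltry.
Qed.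

Lemma ExE g : Ex P g = \int[P]_w g w.
Proof. by []. Qed.

Lemma bmf_cst k : bmf (fun=> k).
Proof. by split => //; exists `|k|. Qed.

Lemma bmfD g h : bmf g -> bmf h -> bmf (fun w => g w + h w).
Proof.
move=> [mg [M hM]] [mh [N hN]]; split; first exact: measurable_funD.
by exists (M + N) => w; rewrite (le_trans (ler_normD _ _)) ?lerD.
Qed.

Lemma bmfM g h : bmf g -> bmf h -> bmf (fun w => g w * h w).
Proof.
move=> [mg [M hM]] [mh [N hN]]; split; first exact: measurable_funM.
exists (M * N) => w; rewrite normrM ler_pM //.
Qed.

Lemma bmf_sum (I : Type) (s : seq I) (F : I -> O -> R) :
  (forall i, bmf (F i)) -> bmf (fun w => \sum_(i <- s) F i w).
Proof.
move=> hF; elim: s => [|i s IH].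
  by under eq_fun do rewrite big_nil; exact: bmf_cst.
by under eq_fun do rewrite big_cons; exact: bmfD.
Qed.

Lemma ExD g h : bmf g -> bmf h -> Ex P (fun w => g w + h w) = Ex P g + Ex P h.
Proof. by move=> hg hh; rewrite !ExE RintegralD //; exact: bmf_int. Qed.

Lemma ExZ k g : bmf g -> Ex P (fun w => k * g w) = k * Ex P g.
Proof. by move=> hg; rewrite !ExE RintegralZl //; exact: bmf_int. Qed.

Lemma Ex_le g h : bmf g -> bmf h -> (forall w, g w <= h w) -> Ex P g <= Ex P h.
Proof. by move=> hg hh gh; rewrite !ExE le_Rintegral //; exact: bmf_int. Qed.

Lemma Ex_sum (I : Type) (s : seq I) (F : I -> O -> R) :
  (forall i, bmf (F i)) -> Ex P (fun w => \sum_(i <- s) F i w) = \sum_(i <- s) Ex P (F i).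
Proof.
move=> hF; elim: s => [|i s IH].
  under eq_fun do rewrite big_nil; rewrite big_nil ExE Rintegral_cst //.
  by rewrite mul0r.
under eq_fun do rewrite big_cons; rewrite big_cons ExD ?IH //; exact: bmf_sum.
Qed.

Lemma Ex_cst k : Ex P (fun=> k) = k.
Proof.
rewrite ExE Rintegral_cst //.
rewrite -[RHS]mulr1; congr (_ * _); exact: (congr1 fine (probability_setT P)).
Qed.

Lemma Ex_indic A : measurable A -> Ex P (\1_A) = fine (P A).
Proof. by move=> mA; rewrite /Ex integral_indic // setIT. Qed.

Lemma ExB g h : bmf g -> bmf h -> Ex P (fun w => g w - h w) = Ex P g - Ex P h.
Proof. by move=> hg hh; rewrite !ExE RintegralB //; exact: bmf_int. Qed.

End ExLemmas.

Section Meas.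
Context {R : realType} {d : nat} {dO : measure_display} {O : measurableType dO}.

Lemma cube_meas : measurable (@cube R d).
Proof.
have -> : @cube R d = \bigcap_(i in [set: 'I_d]) ((fun v => tnth v i) @^-1` `[0, 1]%classic).
  apply/seteqP; split => v /=.
    by move=> hv i _ /=; rewrite in_itv /= hv.
  by move=> hv i; have := hv i I; rewrite /= in_itv.
apply: fin_bigcap_measurable; first exact: finite_finset.
move=> i _; rewrite -[X in measurable X]setTI; exact: measurable_tnth.
Qed.

Definition cubev (g : O -> d.-tuple R) := measurable_fun setT g /\ forall w, cube (g w).

Lemma bmf_coord g i : cubev g -> bmf (fun w => tnth (g w) i).
Proof.
move=> [mg hg]; split.
  apply: (measurableT_comp (f := fun v => tnth v i)) => //; exact: measurable_tnth.
by exists 1 => w; have /andP[h0 h1] := hg w i; rewrite ger0_norm.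
Qed.

Lemma bmf_indic (B : set (d.-tuple R)) (g : O -> d.-tuple R) : measurable B -> measurable_fun setT g ->
  bmf (fun w => (\1_B (g w) : R)).
Proof.
move=> mB mg; split.
  by apply: measurableT_comp => //; exact: measurable_indic.
by exists 1 => w; rewrite /indic; case: (_ \in _); rewrite ?normr1 ?normr0.
Qed.

Lemma bmf_max (g h : O -> R) : bmf g -> bmf h -> bmf (fun w => Num.max (g w) (h w)).
Proof.
move=> [mg [M hM]] [mh [N hN]]; split; first exact: measurable_maxr.
exists (M + N) => w.
have M0 := le_trans (normr_ge0 _) (hM w); have N0 := le_trans (normr_ge0 _) (hN w).
have := hM w; have := hN w.
rewrite /Order.max; case: ifP => _ h1 h2; lra.
Qed.

Context {A : finType} (a0 : A) (r : A -> d.-tuple R) (c : A -> R).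

Lemma bmf_util a g : cubev g -> bmf (fun w => util r c a (g w)).
Proof.
move=> hg; apply: bmfD; last exact: bmf_cst.
apply: bmf_sum => i; apply: bmfM; first exact: bmf_cst.
exact: bmf_coord.
Qed.

Lemma bmf_pval g : cubev g -> bmf (fun w => pval a0 r c (g w)).
Proof.
move=> hg; rewrite /pval; elim: (index_enum A) => [|a s IH].
  by under eq_fun do rewrite big_nil; exact: bmf_util.
under eq_fun do rewrite big_cons; exact: bmf_max (bmf_util _ hg) IH.
Qed.

End Meas.


Section Alg.
Context {R : realType} {d : nat}.
Implicit Types p q m : d.-tuple R.

Lemma cs2 (x y : 'I_d -> R) :
  (\sum_i x i * y i) ^+ 2 <= (\sum_i x i ^+ 2) * (\sum_i y i ^+ 2).
Proof.
have H : 0 <= \sum_i \sum_j (x i * y j - x j * y i) ^+ 2.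
  by apply: sumr_ge0 => i _; apply: sumr_ge0 => j _; exact: sqr_ge0.
have E1 : (\sum_i x i ^+ 2) * (\sum_i y i ^+ 2) = \sum_i \sum_j (x i * y j) ^+ 2.
  rewrite mulr_suml; apply: eq_bigr => i _; rewrite mulr_sumr.
  by apply: eq_bigr => j _; rewrite exprMn.
have E2 : (\sum_i x i ^+ 2) * (\sum_i y i ^+ 2) = \sum_i \sum_j (x j * y i) ^+ 2.
  rewrite mulrC mulr_suml; apply: eq_bigr => i _; rewrite mulr_sumr.
  by apply: eq_bigr => j _; rewrite exprMn mulrC.
have E3 : (\sum_i x i * y i) ^+ 2 = \sum_i \sum_j (x i * y j) * (x j * y i).
  rewrite expr2 mulr_suml; apply: eq_bigr => i _; rewrite mulr_sumr.
  by apply: eq_bigr => j _; ring.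
have E : \sum_i \sum_j (x i * y j - x j * y i) ^+ 2 =
   ((\sum_i x i ^+ 2) * (\sum_i y i ^+ 2) - (\sum_i x i * y i) ^+ 2) *+ 2.
  rewrite mulr2n {1}E1 E2 E3 -!sumrB -big_split /=; apply: eq_bigr => i _.
  rewrite -!sumrB -big_split /=; apply: eq_bigr => j _.
  by rewrite sqrrB; ring.
by move: H; rewrite E pmulrn_lge0 // subr_ge0.
Qed.

Lemma norm2_ge0 p : 0 <= norm2 p.
Proof. exact: sqrtr_ge0. Qed.

Lemma dot_le_norm2 p q : dot p q <= norm2 p * norm2 q.
Proof.
rewrite /norm2 -sqrtrM; last by apply: sumr_ge0 => i _; exact: sqr_ge0.
apply: (le_trans (ler_norm _)).
rewrite -(sqrtr_sqr (dot p q)); apply: ler_wsqrtr; exact: cs2.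
Qed.

Lemma tnth_vsub p q i : tnth (vsub p q) i = tnth p i - tnth q i.
Proof. by rewrite tnth_mktuple. Qed.

Lemma norm2_vsubC p q : norm2 (vsub p q) = norm2 (vsub q p).
Proof.
rewrite /norm2; congr Num.sqrt; apply: eq_bigr => i _.
by rewrite !tnth_vsub -sqrrN opprB.
Qed.

Lemma norm2_vsub0 p : norm2 (vsub p p) = 0.
Proof.
rewrite /norm2 big1 ?sqrtr0 // => i _; by rewrite tnth_vsub subrr expr0n.
Qed.

Lemma dot_vsub x p q : dot x (vsub p q) = dot x p - dot x q.
Proof.
rewrite /dot -sumrB; apply: eq_bigr => i _; by rewrite tnth_vsub mulrBr.
Qed.

Lemma norm2_scale (k : R) (v : d.-tuple R) :
  norm2 [tuple k * tnth v i | i < d] = `|k| * norm2 v.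
Proof.
rewrite /norm2 -sqrtr_sqr -sqrtrM ?sqr_ge0 //; congr Num.sqrt.
rewrite mulr_sumr; apply: eq_bigr => i _; by rewrite tnth_mktuple exprMn.
Qed.

Context {A : finType} (a0 : A) (r : A -> d.-tuple R) (c : A -> R).

Lemma pval_ge b p : util r c b p <= pval a0 r c p.
Proof. exact: le_bigmax. Qed.

Lemma pval_att p : exists a, pval a0 r c p = util r c a p.
Proof.
rewrite /pval; apply: (big_ind (fun v => exists a, v = util r c a p)).
- by exists a0.
- move=> x y [a ->] [b ->]; case: (leP (util r c a p) (util r c b p)) => h.
  + by exists b.
  + by exists a.
- by move=> a _; exists a.
Qed.

Lemma Lconst_ge a : norm2 (r a) <= Lconst r.
Proof. exact: le_bigmax. Qed.

Lemma pval_lip m p : pval a0 r c m - pval a0 r c p <= Lconst r * norm2 (vsub p m).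
Proof.
have [a ->] := pval_att m.
apply: (le_trans (lerB (lexx _) (pval_ge a p))).
rewrite /util opprD addrACA subrr addr0 -dot_vsub norm2_vsubC.
apply: (le_trans (dot_le_norm2 _ _)); apply: ler_wpM2r; first exact: norm2_ge0.
exact: Lconst_ge.
Qed.

Lemma pval_affine_max p : exists a, forall b, util r c b p <= util r c a p.
Proof. have [a h] := pval_att p; exists a => b; rewrite -h; exact: pval_ge. Qed.

End Alg.


Section Topo.
Context {R : realType} {d : nat}.

Definition toT (v : 'rV[R]_d) : d.-tuple R := [tuple v ord0 i | i < d].
Definition ofT (p : d.-tuple R) : 'rV[R]_d := \row_i tnth p i.

Lemma toT_ofT p : toT (ofT p) = p.
Proof. by apply: eq_from_tnth => i; rewrite tnth_mktuple mxE. Qed.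

Lemma cont_sum (I : Type) (s : seq I) (F : I -> 'rV[R]_d -> R) :
  (forall i, continuous (F i)) -> continuous (fun v => \sum_(i <- s) F i v).
Proof.
move=> hF; elim: s => [|i s IH].
  by under eq_fun do rewrite big_nil; exact: cst_continuous.
under eq_fun do rewrite big_cons; move=> x; apply: continuousD; [exact: hF | exact: IH].
Qed.

Lemma cont_coord i : continuous (fun v : 'rV[R]_d => tnth (toT v) i).
Proof.
under eq_fun do rewrite tnth_mktuple; exact: coord_continuous.
Qed.

Context {A : finType} (a0 : A) (r : A -> d.-tuple R) (c : A -> R).

Lemma cont_util a : continuous (fun v => util r c a (toT v)).
Proof.
move=> x; apply: continuousD; last exact: cst_continuous.
apply: cont_sum => i y.
apply: (continuousM (s := cst (tnth (r a) i)) (t := fun v => tnth (toT v) i)).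
  exact: cst_continuous.
exact: cont_coord.
Qed.

Lemma cont_pval : continuous (fun v => pval a0 r c (toT v)).
Proof.
rewrite /pval; elim: (index_enum A) => [|a s IH].
  by under eq_fun do rewrite big_nil; exact: cont_util.
under eq_fun do rewrite big_cons.
move=> x; apply: (continuous_max (f := fun v => util r c a (toT v))
  (g := fun v => \big[Num.max/util r c a0 (toT v)]_(j <- s) util r c j (toT v))).
  exact: cont_util.
exact: IH.
Qed.

Lemma cont_norm m : continuous (fun v => norm2 (vsub (toT v) m)).
Proof.
move=> x; rewrite /norm2.
apply: (continuous_comp (f := fun v : 'rV[R]_d => \sum_(i < d) tnth (vsub (toT v) m) i ^+ 2) (g := Num.sqrt)); last exact: sqrt_continuous.
apply: cont_sum => i y; rewrite /=.
under eq_fun do rewrite tnth_mktuple expr2.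
have hB : continuous (fun v : 'rV[R]_d => tnth (toT v) i - tnth m i).
  move=> z; apply: (continuousB (f := fun v => tnth (toT v) i) (g := cst (tnth m i))).
    exact: cont_coord.
  exact: cst_continuous.
exact: (continuousM (s := fun v : 'rV[R]_d => tnth (toT v) i - tnth m i) (t := fun v : 'rV[R]_d => tnth (toT v) i - tnth m i) (hB y) (hB y)).
Qed.

Lemma worst_exists (m : d.-tuple R) (rad : R) : cube m -> 0 <= rad ->
  exists p, is_worst_belief a0 r c m rad p.
Proof.
move=> cm rad0.
pose S := [set v : 'rV[R]_d | forall i, `[0, 1]%classic (v ord0 i)] `&`
          [set v | norm2 (vsub (toT v) m) <= rad].
have S0 : S !=set0.
  exists (ofT m); split => /=.
    by move=> i; rewrite mxE in_itv /=; exact: cm.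
  by rewrite toT_ofT norm2_vsub0.
have cS : compact S.
  apply: compact_closedI.
    have := @rV_compact R d (fun=> `[0, 1]%classic) (fun=> @segment_compact R 0 1); exact.
  have -> : [set v | norm2 (vsub (toT v) m) <= rad] =
    (fun v => norm2 (vsub (toT v) m)) @^-1` [set x | x <= rad] by [].
  by apply: (continuous_closedP _).1; [exact: cont_norm | exact: closed_le].
have hc : {within S, continuous (fun v => pval a0 r c (toT v))}.
  by apply: continuous_subspaceT; exact: cont_pval.
have [v vS vmin] := EVT_min_rV S0 cS hc.
move: (vS); rewrite inE => -[vbox vnorm].
exists (toT v); split => //.
  by move=> i; rewrite tnth_mktuple; have := vbox i; rewrite /= in_itv.
move=> p' cp' np'; rewrite -(toT_ofT p'); apply: vmin; rewrite inE; split => /=.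
  by move=> i; rewrite mxE in_itv /=; exact: cp'.
by rewrite toT_ofT.
Qed.
End Topo.

Section Main.
Context {R : realType} {d : nat} {dO : measure_display} {O : measurableType dO}
  (P : probability O R) (V : O -> d.-tuple R) (mV : measurable_fun setT V)
  (Vc : forall w, cube (V w))
  {A : finType} (a0 : A) (r : A -> d.-tuple R) (c : A -> R)
  (J : nat) (B : 'I_J -> set (d.-tuple R)) (mB : forall j, measurable (B j))
  (disjB : forall i j : 'I_J, i != j -> B i `&` B j = set0)
  (covB : forall v, cube v <-> exists j, B j v)
  (Ppos : forall j, 0 < binprob P V (B j)).

Let ind j w : R := \1_(B j) (V w).
Let Pj j := binprob P V (B j).
Let mj j := binmean P V (B j).

Lemma cV : cubev V.
Proof. by split. Qed.

Lemma bmf_ind j : bmf (ind j).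
Proof. exact: bmf_indic. Qed.

Lemma ind_ge0 j w : 0 <= ind j w.
Proof. by rewrite /ind /indic; case: (_ \in _). Qed.

Lemma ind_le1 j w : ind j w <= 1.
Proof. by rewrite /ind /indic; case: (_ \in _). Qed.

Lemma Pj_Ex j : Pj j = Ex P (ind j).
Proof.
have mVB : measurable (V @^-1` B j) by rewrite -[X in measurable X]setTI; exact: mV.
rewrite /Pj /binprob -Ex_indic //.
Qed.

Lemma sum_ind_sel (h : 'I_J -> R) j0 v : B j0 v ->
  \sum_j (\1_(B j) v : R) * h j = h j0.
Proof.
move=> hv; rewrite (bigD1 j0) //= big1 ?addr0.
  by rewrite /indic mem_set // mul1r.
move=> j hj; rewrite /indic memNset ?mul0r //.
move=> hjv; have := disjB hj; rewrite -[X in X -> _]/(_ = _) => /seteqP [+ _].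
by move=> /(_ v) /= /(_ (conj hjv hv)).
Qed.

Lemma bmf_indV j i : bmf (fun w => ind j w * tnth (V w) i).
Proof. apply: bmfM; [exact: bmf_ind | exact: bmf_coord cV]. Qed.

Lemma PEx j i : Ex P (fun w => ind j w * tnth (V w) i) = Pj j * tnth (mj j) i.
Proof.
rewrite /mj /binmean tnth_mktuple mulrA mulfV ?mul1r //.
by rewrite gt_eqF // Ppos.
Qed.

Lemma Ex_ind_const j k : Ex P (fun w => ind j w * k) = k * Pj j.
Proof.
rewrite Pj_Ex -ExZ; last exact: bmf_ind.
by congr Ex; apply: funext => w; rewrite mulrC.
Qed.

Lemma mj_cube j : cube (mj j).
Proof.
move=> i; have P0 := Ppos j.
have h0 : 0 <= Ex P (fun w => ind j w * tnth (V w) i).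
  rewrite -(Ex_cst P 0); apply: Ex_le; [exact: bmf_cst | exact: bmf_indV |].
  by move=> w; apply: mulr_ge0; [exact: ind_ge0 | have /andP[] := Vc w i].
have h1 : Ex P (fun w => ind j w * tnth (V w) i) <= Pj j.
  rewrite Pj_Ex; apply: Ex_le; [exact: bmf_indV | exact: bmf_ind |].
  move=> w; rewrite -[leRHS]mulr1; apply: ler_wpM2l; first exact: ind_ge0.
  by have /andP[] := Vc w i.
rewrite PEx in h0 h1.
apply/andP; split.
  by rewrite -(pmulr_rge0 _ P0).
by rewrite -(ler_pM2l P0) mulr1.
Qed.

Section qs.
Variables (eps : R) (heps : 0 <= eps) (ps : 'I_J -> d.-tuple R) (qs : d.-tuple R -> d.-tuple R).
Variables (hps : forall j, is_worst_belief a0 r c (mj j) (eps / Pj j) (ps j))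
  (hqs : forall j v, B j v -> qs v = ps j).

Lemma val_qs : Ex P (fun w => pval a0 r c (qs (V w))) = \sum_j Pj j * pval a0 r c (ps j).
Proof.
have -> : (fun w => pval a0 r c (qs (V w))) = (fun w => \sum_j ind j w * pval a0 r c (ps j)).
  apply: funext => w; have [j0 hj0] := (covB (V w)).1 (Vc w).
  by rewrite /ind (sum_ind_sel _ hj0) (hqs hj0).
rewrite Ex_sum; last by move=> j; apply: bmfM; [exact: bmf_ind | exact: bmf_cst].
by apply: eq_bigr => j _; rewrite Ex_ind_const mulrC.
Qed.

Lemma Qset_qs : Qset P V B eps qs.
Proof.
split.
- move=> mcube Y mY.
  have -> : cube `&` qs @^-1` Y = \bigcup_(j in [set j | Y (ps j)]) B j.
    apply/seteqP; split => v.
      move=> [cv Yv]; have [j hj] := (covB v).1 cv; exists j => //=.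
      by rewrite -(hqs hj).
    move=> [j /= Yj hj]; split; first by apply: (covB v).2; exists j.
    by rewrite /preimage /= (hqs hj).
  by apply: fin_bigcup_measurable; [exact: finite_finset | move=> j _; exact: mB].
- move=> v cv; have [j hj] := (covB v).1 cv; rewrite (hqs hj); by case: (hps j).
- move=> j; have P0 := Ppos j.
  have -> : Evec P (fun w => [tuple \1_(B j) (V w) * tnth (vsub (qs (V w)) (V w)) i | i < d])
      = [tuple Pj j * tnth (vsub (ps j) (mj j)) i | i < d].
    apply: eq_from_tnth => i; rewrite tnth_mktuple [in RHS]tnth_mktuple tnth_vsub mulrBr -PEx.
    rewrite mulrC -Ex_ind_const -ExB; [| apply: bmfM; [exact: bmf_ind | exact: bmf_cst] | exact: bmf_indV].
    congr Ex; apply: funext => w; rewrite !tnth_mktuple.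
    have [hv|hv] := pselect (B j (V w)).
      by rewrite (hqs hv) /ind mulrBr.
    by rewrite /ind /indic memNset // !mul0r subr0.
  rewrite norm2_scale ger0_norm; last exact: ltW.
  have [_ h _] := hps j.
  apply: le_trans (ler_wpM2l (ltW P0) h) _.
  by rewrite mulrCA mulfV ?mulr1 // gt_eqF.
Qed.

Lemma ind_sum1 w : \sum_j ind j w = 1.
Proof.
have [j0 hj0] := (covB (V w)).1 (Vc w).
rewrite -(sum_ind_sel (fun=> 1) hj0); apply: eq_bigr => j _; by rewrite mulr1.
Qed.

Lemma opt_qs q : Qset P V B eps q ->
  Ex P (fun w => pval a0 r c (qs (V w))) <= Ex P (fun w => pval a0 r c (q (V w))).
Proof.
move=> [mq qc qn].
have cqV : cubev (fun w => q (V w)).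
  split; last by move=> w; exact: qc (Vc w).
  have sub : V @` setT `<=` cube by move=> _ [w _ <-]; exact: Vc.
  exact: (measurable_comp cube_meas sub mq mV).
rewrite val_qs.
have -> : (fun w => pval a0 r c (q (V w))) =
          (fun w => \sum_j ind j w * pval a0 r c (q (V w))).
  by apply: funext => w; rewrite -mulr_suml ind_sum1 mul1r.
rewrite Ex_sum; last by move=> j; apply: bmfM; [exact: bmf_ind | exact: bmf_pval].
apply: ler_sum => j _.
have P0 := Ppos j.
set g := [tuple (Pj j)^-1 * Ex P (fun w => ind j w * tnth (q (V w)) i) | i < d].
have hE i : Ex P (fun w => ind j w * tnth (q (V w)) i) = Pj j * tnth g i.
  by rewrite tnth_mktuple mulrA mulfV ?mul1r // gt_eqF.
have bq i : bmf (fun w => ind j w * tnth (q (V w)) i).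
  by apply: bmfM; [exact: bmf_ind | exact: bmf_coord].
have gc : cube g.
  move=> i.
  have h0 : 0 <= Ex P (fun w => ind j w * tnth (q (V w)) i).
    rewrite -(Ex_cst P 0); apply: Ex_le; [exact: bmf_cst | exact: bq |].
    by move=> w; apply: mulr_ge0; [exact: ind_ge0 | have /andP[] := cqV.2 w i].
  have h1 : Ex P (fun w => ind j w * tnth (q (V w)) i) <= Pj j.
    rewrite Pj_Ex; apply: Ex_le; [exact: bq | exact: bmf_ind |].
    move=> w; rewrite -[leRHS]mulr1; apply: ler_wpM2l; first exact: ind_ge0.
    by have /andP[] := cqV.2 w i.
  rewrite hE in h0 h1.
  apply/andP; split.
    by rewrite -(pmulr_rge0 _ P0).
  by rewrite -(ler_pM2l P0) mulr1.
have gn : norm2 (vsub g (mj j)) <= eps / Pj j.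
  have -> : vsub g (mj j) = [tuple (Pj j)^-1 * tnth (Evec P (fun w =>
      [tuple \1_(B j) (V w) * tnth (vsub (q (V w)) (V w)) i | i < d])) i | i < d].
    apply: eq_from_tnth => i.
    rewrite tnth_vsub [in RHS]tnth_mktuple [in RHS]tnth_mktuple.
    have -> : Ex P (fun w => tnth [tuple \1_(B j) (V w) * tnth (vsub (q (V w)) (V w)) i0 | i0 < d] i)
       = Ex P (fun w => ind j w * tnth (q (V w)) i - ind j w * tnth (V w) i).
      by congr Ex; apply: funext => w; rewrite !tnth_mktuple mulrBr.
    rewrite ExB //; last exact: bmf_indV.
    by rewrite hE PEx -mulrBr mulrA mulVf ?mul1r // gt_eqF.
  rewrite norm2_scale ger0_norm; last by rewrite invr_ge0 ltW.
  rewrite mulrC; apply: ler_wpM2r; last exact: qn.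
  by rewrite invr_ge0 ltW.
have hv : pval a0 r c (ps j) <= pval a0 r c g.
  by case: (hps j) => _ _ h; exact: h gc gn.
apply: le_trans (ler_wpM2l (ltW P0) hv) _.
have [a ->] := pval_att a0 r c g.
have -> : Pj j * util r c a g = Ex P (fun w => ind j w * util r c a (q (V w))).
  have -> : (fun w => ind j w * util r c a (q (V w))) =
    (fun w => \sum_i tnth (r a) i * (ind j w * tnth (q (V w)) i) + ind j w * c a).
    apply: funext => w; rewrite /util /dot mulrDr mulr_sumr; congr (_ + _).
    by apply: eq_bigr => i _; rewrite mulrCA.
  rewrite ExD; first last.
  - by apply: bmfM; [exact: bmf_ind | exact: bmf_cst].
  - by apply: bmf_sum => i; apply: bmfM; [exact: bmf_cst | exact: bq].
  rewrite Ex_sum; last by move=> i; apply: bmfM; [exact: bmf_cst | exact: bq].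
  rewrite Ex_ind_const /util /dot mulrDr mulr_sumr; congr (_ + _); last by rewrite mulrC.
  by apply: eq_bigr => i _; rewrite ExZ // hE mulrCA.
apply: Ex_le.
- by apply: bmfM; [exact: bmf_ind | exact: bmf_util].
- by apply: bmfM; [exact: bmf_ind | exact: bmf_pval].
- by move=> w; apply: ler_wpM2l; [exact: ind_ge0 | exact: pval_ge].
Qed.

Lemma upper_b : \sum_j Pj j * pval a0 r c (ps j) <= \sum_j Pj j * pval a0 r c (mj j).
Proof.
apply: ler_sum => j _; apply: ler_wpM2l; first exact: ltW (Ppos j).
case: (hps j) => _ _ h; apply: h; first exact: mj_cube.
by rewrite norm2_vsub0; apply: divr_ge0 => //; exact: ltW (Ppos j).
Qed.

Lemma lower_b : \sum_j Pj j * pval a0 r c (mj j) - J%:R * Lconst r * eps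
   <= \sum_j Pj j * pval a0 r c (ps j).
Proof.
have -> : J%:R * Lconst r * eps = \sum_(j < J) (Lconst r * eps).
  by rewrite sumr_const card_ord -mulrA mulr_natl.
rewrite -sumrB; apply: ler_sum => j _.
have P0 := Ppos j.
have L0 : 0 <= Lconst r := le_trans (norm2_ge0 (r a0)) (Lconst_ge r a0).
have h := pval_lip a0 r c (mj j) (ps j).
have [_ hn _] := hps j.
have H : Pj j * (pval a0 r c (mj j) - pval a0 r c (ps j)) <= Pj j * (Lconst r * (eps / Pj j)).
  by apply: ler_wpM2l; [exact: ltW | exact: le_trans h (ler_wpM2l L0 hn)].
have H1 : Pj j * (Lconst r * (eps / Pj j)) = Lconst r * eps.
  by rewrite mulrCA [Pj j * _]mulrCA mulfV ?mulr1 // gt_eqF.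
rewrite H1 mulrBr in H; lra.
Qed.

End qs.

End Main.

Unset Implicit Arguments.
Theorem proposition3
  (R : realType) (d : nat)
  (dO : measure_display) (Omega : measurableType dO) (P : probability Omega R)
  (dX : measure_display) (Xsp : measurableType dX)
  (X : Omega -> Xsp) (Y : Omega -> d.-tuple R) (f : Xsp -> d.-tuple R)
  (mX : measurable_fun setT X) (mY : measurable_fun setT Y)
  (Ycube : forall w, cube (Y w))
  (mf : measurable_fun setT f) (fcube : forall x, cube (f x))
  (A : finType) (a0 : A) (r : A -> d.-tuple R) (c : A -> R)
  (J : nat) (B : 'I_J -> set (d.-tuple R))
  (mB : forall j, measurable (B j))
  (disjB : forall i j : 'I_J, i != j -> B i `&` B j = set0)
  (covB : forall v, cube v <-> exists j, B j v)
  (Ppos : forall j, 0 < binprob P (f \o X) (B j))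
  (eps : R) (heps : 0 <= eps) :
  (forall j : 'I_J, exists p,
      is_worst_belief a0 r c (binmean P (f \o X) (B j)) (eps / binprob P (f \o X) (B j)) p)
  /\
  (forall (ps : 'I_J -> d.-tuple R) (qs : d.-tuple R -> d.-tuple R),
      (forall j, is_worst_belief a0 r c (binmean P (f \o X) (B j))
                   (eps / binprob P (f \o X) (B j)) (ps j)) ->
      (forall j v, B j v -> qs v = ps j) ->
      [/\ Qset P (f \o X) B eps qs,
          (forall q : d.-tuple R -> d.-tuple R, Qset P (f \o X) B eps q ->
             Ex P (fun w => pval a0 r c (qs (f (X w))))
             <= Ex P (fun w => pval a0 r c (q (f (X w))))),
          \sum_(j < J) binprob P (f \o X) (B j) * pval a0 r c (binmean P (f \o X) (B j))
            - J%:R * Lconst r * eps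
          <= Ex P (fun w => pval a0 r c (qs (f (X w)))),
          Ex P (fun w => pval a0 r c (qs (f (X w))))
          <= \sum_(j < J) binprob P (f \o X) (B j) * pval a0 r c (binmean P (f \o X) (B j))
        & forall j, exists a : A, forall b : A, util r c b (ps j) <= util r c a (ps j)]).

Proof.
pose V := f \o X.
have mV : measurable_fun setT V by apply: measurableT_comp.
have Vc : forall w, cube (V w) by move=> w; exact: fcube.
split.
  move=> j; apply: worst_exists.
    exact: (mj_cube mV Vc mB Ppos).
  by apply: divr_ge0 => //; exact: ltW (Ppos j).
move=> ps qs hps hqs; split.
- by apply: Qset_qs.
- by move=> q hq; apply: opt_qs.
- rewrite (val_qs P mV Vc a0 r c mB disjB covB hqs).
  by apply: lower_b.
- rewrite (val_qs P mV Vc a0 r c mB disjB covB hqs).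
  exact: (upper_b mV Vc mB Ppos heps hps).
- move=> j; exact: pval_affine_max.
Qed.
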